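(* Consider the all-to-all Kuramoto model $\dot\theta_i=\omega_i+\frac KN\sum_{j=1}^N\sin(\theta_j-\theta_i)$, $i=1,\dots,N$, with $\omega_{\max}=\max_i\omega_i$, $\omega_{\min}=\min_i\omega_i$. Let $\epsilon\in(0,\pi/4)$ and $\mathcal D=\{\theta\in\mathbb R^N: |\theta_i-\theta_j|\le\frac\pi2-2\epsilon\ \forall i,j\}$. If $\theta(0)\in\mathcal D$ and $K>\frac{N(\omega_{\max}-\omega_{\min})}{2\cos(2\epsilon)}$, then the oscillators asymptotically frequency synchronize: $\dot\theta_i(t)-\dot\theta_j(t)\to0$ as $t\to\infty$ for all $i,j=1,\dots,N$. *)

(* Defs.v *)
From Stdlib Require Import Reals List.
From Coquelicot Require Import Coquelicot.
Open Scope R_scope.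

(* Oscillators are indexed by 0, ..., N-1. *)

(* max_i omega_i over i = 0..N-1 (meaningful for N >= 1). *)
Definition omega_max (N : nat) (omega : nat -> R) : R :=
  fold_right Rmax (omega 0%nat) (map omega (seq 0 N)).

(* min_i omega_i over i = 0..N-1 (meaningful for N >= 1). *)
Definition omega_min (N : nat) (omega : nat -> R) : R :=
  fold_right Rmin (omega 0%nat) (map omega (seq 0 N)).

Definition kuramoto_rhs (N : nat) (K : R) (omega : nat -> R)
  (th : nat -> R) (i : nat) : R :=
  omega i + K / INR N *
    fold_right Rplus 0 (map (fun j => sin (th j - th i)) (seq 0 N)).

Definition is_kuramoto_solution (N : nat) (K : R) (omega : nat -> R)
  (theta : nat -> R -> R) : Prop :=
  (forall i, (i < N)%nat ->
     filterlim (theta i) (at_right 0) (locally (theta i 0))) /\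
  (forall i t, (i < N)%nat -> 0 < t ->
     is_derive (theta i) t (kuramoto_rhs N K omega (fun j => theta j t) i)).

Definition in_D (N : nat) (eps : R) (th : nat -> R) : Prop :=
  forall i j, (i < N)%nat -> (j < N)%nat -> Rabs (th i - th j) <= PI / 2 - 2 * eps.

(* Main.v *)
Require Import Defs.
From Stdlib Require Import Reals List Lra Lia Classical.
From Coquelicot Require Import Coquelicot.
Open Scope R_scope.
Definition ls (l : list nat) (f : nat -> R) : R := fold_right Rplus 0 (map f l).

Lemma ls_nil f : ls nil f = 0. Proof. reflexivity. Qed.
Lemma ls_cons a l f : ls (a :: l) f = f a + ls l f. Proof. reflexivity. Qed.

Lemma ls_ext l f g : (forall i, In i l -> f i = g i) -> ls l f = ls l g.
Proof. induction l; intros H; rewrite ?ls_nil, ?ls_cons; auto.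
  rewrite H by (left; auto). rewrite IHl; auto. intros; apply H; right; auto. Qed.

Lemma ls_plus l f g : ls l (fun i => f i + g i) = ls l f + ls l g.
Proof. induction l; rewrite ?ls_nil, ?ls_cons; [lra|]. rewrite IHl; lra. Qed.

Lemma ls_minus l f g : ls l (fun i => f i - g i) = ls l f - ls l g.
Proof. induction l; rewrite ?ls_nil, ?ls_cons; [lra|]. rewrite IHl; lra. Qed.

Lemma ls_scal l c f : ls l (fun i => c * f i) = c * ls l f.
Proof. induction l; rewrite ?ls_nil, ?ls_cons; [lra|]. rewrite IHl; lra. Qed.

Lemma ls_scalr l c f : ls l (fun i => f i * c) = ls l f * c.
Proof. induction l; rewrite ?ls_nil, ?ls_cons; [lra|]. rewrite IHl; lra. Qed.

Lemma ls_const l c : ls l (fun _ => c) = INR (length l) * c.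
Proof. induction l; rewrite ?ls_nil, ?ls_cons; simpl length; [simpl; lra|].
  rewrite IHl, S_INR; lra. Qed.

Lemma ls_zero l : ls l (fun _ => 0) = 0.
Proof. rewrite ls_const; lra. Qed.

Lemma ls_le l f g : (forall i, In i l -> f i <= g i) -> ls l f <= ls l g.
Proof. induction l; intros H; rewrite ?ls_nil, ?ls_cons; [lra|].
  assert (f a <= g a) by (apply H; left; auto).
  assert (ls l f <= ls l g) by (apply IHl; intros; apply H; right; auto). lra. Qed.

Lemma ls_nonneg l f : (forall i, In i l -> 0 <= f i) -> 0 <= ls l f.
Proof. intros H. rewrite <- (ls_zero l). apply ls_le; auto. Qed.

Lemma ls_ge1 l f a : (forall i, In i l -> 0 <= f i) -> In a l -> f a <= ls l f.
Proof. induction l; intros H Ha; [destruct Ha|]. rewrite ls_cons.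
  assert (0 <= ls l f) by (apply ls_nonneg; intros; apply H; right; auto).
  assert (0 <= f a0) by (apply H; left; auto).
  destruct Ha as [->|Ha]; [lra|].
  assert (f a <= ls l f) by (apply IHl; auto; intros; apply H; right; auto). lra. Qed.

Lemma ls_ge2 l f a b : NoDup l -> (forall i, In i l -> 0 <= f i) -> In a l -> In b l -> a <> b ->
  f a + f b <= ls l f.
Proof. induction l; intros ND H Ha Hb Hab; [destruct Ha|]. rewrite ls_cons.
  inversion ND; subst.
  assert (0 <= f a0) by (apply H; left; auto).
  assert (H' : forall i, In i l -> 0 <= f i) by (intros; apply H; right; auto).
  destruct Ha as [->|Ha]; destruct Hb as [->|Hb].
  - congruence.
  - pose proof (ls_ge1 l f b H' Hb); lra.
  - pose proof (ls_ge1 l f a H' Ha); lra.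
  - pose proof (IHl H3 H' Ha Hb Hab). pose proof (ls_nonneg l f H'); lra. Qed.

Lemma ls_swap l1 l2 (F : nat -> nat -> R) :
  ls l1 (fun i => ls l2 (F i)) = ls l2 (fun j => ls l1 (fun i => F i j)).
Proof. induction l1; rewrite ?ls_nil, ?ls_cons.
  - rewrite ls_zero; auto.
  - rewrite IHl1. rewrite <- ls_plus. apply ls_ext; intros; rewrite ls_cons; auto. Qed.

Lemma ls_derive l (F : nat -> R -> R) dF t :
  (forall i, In i l -> is_derive (F i) t (dF i)) ->
  is_derive (fun s => ls l (fun i => F i s)) t (ls l dF).
Proof. induction l; intros H.
  - unfold ls; simpl. apply (is_derive_const (K:=R_AbsRing) 0).
  - rewrite ls_cons. apply (is_derive_plus (fun s => F a s) (fun s => ls l (fun i => F i s))).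
    + apply H; left; auto.
    + apply IHl; intros; apply H; right; auto. Qed.

Lemma ls_lim l (F : nat -> R -> R) L t :
  (forall i, In i l -> filterlim (F i) (at_right t) (locally (L i))) ->
  filterlim (fun s => ls l (fun i => F i s)) (at_right t) (locally (ls l L)).
Proof. induction l; intros H.
  - unfold ls; simpl. apply (@filterlim_const _ R_UniformSpace (at_right t) _ (0:R)).
  - rewrite ls_cons. unfold ls; simpl. 
    eapply filterlim_comp_2; [apply H; left; auto| apply IHl; intros; apply H; right; auto|].
    apply (filterlim_plus (K:=R_AbsRing) (V:=R_NormedModule)). Qed.

Lemma right_lim_ev f a L e : filterlim f (at_right a) (locally L) -> 0 < e ->
  exists d, 0 < d /\ forall y, a < y < a + d -> Rabs (f y - L) < e.
Proof. intros H He.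
  destruct (H (fun z => Rabs (z - L) < e)) as [d Hd].
  { exists (mkposreal e He). intros y Hy. exact Hy. }
  exists d. split; [apply cond_pos|]. intros y Hy. apply Hd; [|lra].
  change (Rabs (y - a) < d). rewrite Rabs_right; lra. Qed.

Lemma derive_cont f x l : is_derive f x l -> continuity_pt f x.
Proof. intros H. apply continuity_pt_filterlim. apply (ex_derive_continuous (K:=R_AbsRing) (V:=R_NormedModule)).
  exists l; exact H. Qed.

Lemma nonincr f df a b : a < b -> filterlim f (at_right a) (locally (f a)) ->
  (forall x, a < x <= b -> is_derive f x (df x)) -> (forall x, a < x <= b -> df x <= 0) ->
  f b <= f a.
Proof. intros Hab Hc Hd Hs. destruct (Rle_or_lt (f b) (f a)) as [|Hlt]; auto. exfalso.
  destruct (right_lim_ev f a (f a) (f b - f a) Hc) as [d [Hd0 Hd1]]; [lra|].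
  set (y := a + Rmin (d/2) ((b-a)/2)).
  assert (Hy1 : a < y) by (unfold y; apply Rmin_case; lra).
  assert (Hy2 : y < b) by (unfold y; pose proof (Rmin_r (d/2) ((b-a)/2)); lra).
  assert (Hy3 : y < a + d) by (unfold y; pose proof (Rmin_l (d/2) ((b-a)/2)); lra).
  pose proof (Hd1 y (conj Hy1 Hy3)) as Hfy.
  destruct (MVT_gen f y b df) as [c [Hc1 Hc2]].
  - rewrite Rmin_left, Rmax_right by lra. intros x Hx; apply Hd; lra.
  - rewrite Rmin_left, Rmax_right by lra. intros x Hx; apply derive_cont with (df x); apply Hd; lra.
  - rewrite Rmin_left, Rmax_right in Hc1 by lra.
    assert (df c <= 0) by (apply Hs; lra).
    assert (df c * (b - y) <= 0) by (apply Rmult_le_0_r; lra).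
    apply Rabs_def2 in Hfy. lra. Qed.

Section L.
Context {T : Type} {F : (T -> Prop) -> Prop} {FF : Filter F}.
Lemma lim_plus (f g : T -> R) a b : filterlim f F (locally a) -> filterlim g F (locally b) ->
  filterlim (fun x => f x + g x) F (locally (a + b)).
Proof. intros Hf Hg. eapply filterlim_comp_2; [exact Hf|exact Hg|].
  apply (filterlim_plus (K:=R_AbsRing) (V:=R_NormedModule)). Qed.
Lemma lim_mult (f g : T -> R) a b : filterlim f F (locally a) -> filterlim g F (locally b) ->
  filterlim (fun x => f x * g x) F (locally (a * b)).
Proof. intros Hf Hg. eapply filterlim_comp_2; [exact Hf|exact Hg|].
  apply (filterlim_mult (K:=R_AbsRing)). Qed.
Lemma lim_const (c : R) : filterlim (fun _ => c) F (locally c).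
Proof. apply filterlim_const. Qed.
Lemma lim_opp (f : T -> R) a : filterlim f F (locally a) -> filterlim (fun x => - f x) F (locally (- a)).
Proof. intros Hf. eapply filterlim_comp; [exact Hf|].
  apply (filterlim_opp (K:=R_AbsRing) (V:=R_NormedModule)). Qed.
Lemma lim_minus (f g : T -> R) a b : filterlim f F (locally a) -> filterlim g F (locally b) ->
  filterlim (fun x => f x - g x) F (locally (a - b)).
Proof. intros Hf Hg. apply lim_plus; auto. apply lim_opp; auto. Qed.
Lemma lim_sin (f : T -> R) a : filterlim f F (locally a) -> filterlim (fun x => sin (f x)) F (locally (sin a)).
Proof. intros Hf. eapply filterlim_comp; [exact Hf|]. apply continuous_sin. Qed.
End L.

Lemma der_sin_diff u v t du dv : is_derive u t du -> is_derive v t dv ->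
  is_derive (fun s => sin (u s - v s)) t (cos (u t - v t) * (du - dv)).
Proof. intros Hu Hv.
  assert (H1 : is_derive (fun s => u s - v s) t (du - dv)).
  { apply (is_derive_minus (K:=R_AbsRing) (V:=R_NormedModule)); auto. }
  assert (H2 : is_derive sin (u t - v t) (cos (u t - v t))).
  { apply is_derive_Reals. apply derivable_pt_lim_sin. }
  pose proof (is_derive_comp (K:=R_AbsRing) (V:=R_NormedModule) sin (fun s => u s - v s) t _ _ H2 H1) as H.
  simpl in H. unfold scal in H; simpl in H. unfold mult in H; simpl in H.
  rewrite Rmult_comm. exact H. Qed.

Lemma fold_max_ge (w : nat -> R) l x0 a : In a l -> w a <= fold_right Rmax x0 (map w l).
Proof. induction l; intros H; [destruct H|]. simpl. destruct H as [->|H].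
  - apply Rmax_l.
  - eapply Rle_trans; [apply IHl; auto| apply Rmax_r]. Qed.
Lemma fold_min_le (w : nat -> R) l x0 a : In a l -> fold_right Rmin x0 (map w l) <= w a.
Proof. induction l; intros H; [destruct H|]. simpl. destruct H as [->|H].
  - apply Rmin_l.
  - eapply Rle_trans; [apply Rmin_r| apply IHl; auto]. Qed.

Lemma in_seq0 N a : (a < N)%nat -> In a (seq 0 N).
Proof. intros; apply in_seq; lia. Qed.

Lemma omega_diff N w a b : (a < N)%nat -> (b < N)%nat -> w a - w b <= omega_max N w - omega_min N w.
Proof. intros Ha Hb. unfold omega_max, omega_min.
  pose proof (fold_max_ge w (seq 0 N) (w 0%nat) a (in_seq0 N a Ha)).
  pose proof (fold_min_le w (seq 0 N) (w 0%nat) b (in_seq0 N b Hb)). lra. Qed.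

Lemma rhs_eq N K w th i : kuramoto_rhs N K w th i = w i + K / INR N * ls (seq 0 N) (fun j => sin (th j - th i)).
Proof. reflexivity. Qed.

Lemma K_facts N K eps w : (1 <= N)%nat -> 0 < eps < PI / 4 ->
  K > INR N * (omega_max N w - omega_min N w) / (2 * cos (2 * eps)) ->
  0 < K /\ 0 < cos (2 * eps) /\ omega_max N w - omega_min N w < 2 * K * cos (2 * eps) / INR N.
Proof. intros HN He HK.
  assert (Hc : 0 < cos (2 * eps)) by (apply cos_gt_0; pose proof PI_RGT_0; lra).
  assert (HNp : 0 < INR N) by (apply lt_0_INR; lia).
  assert (Hd : 0 <= omega_max N w - omega_min N w).
  { pose proof (omega_diff N w 0 0 ltac:(lia) ltac:(lia)); lra. }
  set (D := omega_max N w - omega_min N w) in *.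
  assert (H0 : 0 <= INR N * D / (2 * cos (2 * eps))).
  { apply Rmult_le_pos; [apply Rmult_le_pos; lra| left; apply Rinv_0_lt_compat; lra]. }
  split; [lra|]. split; [auto|].
  assert (H1 : INR N * D < K * (2 * cos (2 * eps))).
  { apply Rmult_lt_compat_r with (r := 2 * cos (2*eps)) in HK; [|lra].
    replace (INR N * D / (2 * cos (2 * eps)) * (2 * cos (2 * eps))) with (INR N * D) in HK by (field; lra). lra. }
  apply Rmult_lt_reg_l with (INR N); auto.
  replace (INR N * (2 * K * cos (2 * eps) / INR N)) with (K * (2 * cos (2 * eps))) by (field; lra). lra. Qed.

Lemma boundary_neg N K eps w th a b : (1 <= N)%nat -> 0 < eps < PI / 4 ->
  K > INR N * (omega_max N w - omega_min N w) / (2 * cos (2 * eps)) ->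
  in_D N eps th -> (a < N)%nat -> (b < N)%nat -> th a - th b = PI / 2 - 2 * eps ->
  kuramoto_rhs N K w th a - kuramoto_rhs N K w th b < 0.
Proof. intros HN He HK HD Ha Hb Hab.
  destruct (K_facts N K eps w HN He HK) as [HK0 [Hc Hw]].
  pose proof (omega_diff N w a b Ha Hb) as Hwab.
  assert (HNp : 0 < INR N) by (apply lt_0_INR; lia).
  pose proof PI_RGT_0.
  assert (Hne : a <> b) by (intro; subst; lra).
  rewrite !rhs_eq.
  set (S := ls (seq 0 N) (fun j => sin (th a - th j) + sin (th j - th b))).
  assert (E : ls (seq 0 N) (fun j => sin (th j - th a)) - ls (seq 0 N) (fun j => sin (th j - th b)) = - S).
  { unfold S. rewrite <- ls_minus. replace (- ls (seq 0 N) (fun j => sin (th a - th j) + sin (th j - th b)))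
      with (-1 * ls (seq 0 N) (fun j => sin (th a - th j) + sin (th j - th b))) by ring.
    rewrite <- ls_scal. apply ls_ext; intros j _. replace (th j - th a) with (- (th a - th j)) by ring.
    rewrite sin_neg; ring. }
  assert (HS : 2 * cos (2 * eps) <= S).
  { rewrite <- sin_shift.
    assert (Hnn : forall j, In j (seq 0 N) -> 0 <= sin (th a - th j) + sin (th j - th b)).
    { intros j Hj. apply in_seq in Hj. assert (Hj' : (j < N)%nat) by lia.
      pose proof (HD j b Hj' Hb). pose proof (HD a j Ha Hj').
      pose proof (Rle_abs (th j - th b)). pose proof (Rle_abs (th a - th j)).
      apply Rplus_le_le_0_compat; apply sin_ge_0; lra. }
    pose proof (ls_ge2 (seq 0 N) _ a b (seq_NoDup N 0) Hnn (in_seq0 N a Ha) (in_seq0 N b Hb) Hne) as H2.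
    simpl in H2. rewrite !Rminus_diag, !sin_0, Hab in H2. fold S in H2. lra. }
  assert (Hm : K / INR N * (2 * cos (2 * eps)) <= K / INR N * S).
  { apply Rmult_le_compat_l; auto. apply Rlt_le, Rdiv_lt_0_compat; auto. }
  assert (Heq : K / INR N * (2 * cos (2 * eps)) = 2 * K * cos (2 * eps) / INR N) by (field; lra).
  replace (w a + K / INR N * ls (seq 0 N) (fun j => sin (th j - th a)) -
     (w b + K / INR N * ls (seq 0 N) (fun j => sin (th j - th b))))
   with (w a - w b + K / INR N * (ls (seq 0 N) (fun j => sin (th j - th a)) - ls (seq 0 N) (fun j => sin (th j - th b)))) by ring.
  rewrite E. lra. Qed.

Lemma sol_rc N K w th : is_kuramoto_solution N K w th -> forall k t, (k < N)%nat -> 0 <= t ->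
  filterlim (th k) (at_right t) (locally (th k t)).
Proof. intros [H0 H1] k t Hk Ht. destruct Ht as [Ht| <-]; [|apply H0; auto].
  eapply filterlim_filter_le_1; [apply filter_le_within|].
  apply (ex_derive_continuous (K:=R_AbsRing) (V:=R_NormedModule)).
  eexists; apply H1; auto. Qed.

Lemma lim_rhs N K w th t a : (forall k, (k < N)%nat -> filterlim (th k) (at_right t) (locally (th k t))) ->
  (a < N)%nat ->
  filterlim (fun s => kuramoto_rhs N K w (fun j => th j s) a) (at_right t)
    (locally (kuramoto_rhs N K w (fun j => th j t) a)).
Proof. intros H Ha. rewrite rhs_eq.
  apply (lim_plus (fun _ => w a) (fun s => K / INR N * ls (seq 0 N) (fun j => sin (th j s - th a s)))).
  - apply lim_const.
  - apply (lim_mult (fun _ => K / INR N)); [apply lim_const|].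
    apply (ls_lim (seq 0 N) (fun j s => sin (th j s - th a s))). intros j Hj. apply in_seq in Hj.
    apply lim_sin. apply lim_minus; apply H; lia. Qed.

Lemma der_diff N K w th a b x : is_kuramoto_solution N K w th -> (a < N)%nat -> (b < N)%nat -> 0 < x ->
  is_derive (fun s => th a s - th b s) x
   (kuramoto_rhs N K w (fun j => th j x) a - kuramoto_rhs N K w (fun j => th j x) b).
Proof. intros [_ H1] Ha Hb Hx. apply (is_derive_minus (K:=R_AbsRing) (V:=R_NormedModule)); apply H1; auto. Qed.

Lemma pair_step N K eps w th t a b : (1 <= N)%nat -> 0 < eps < PI / 4 ->
  K > INR N * (omega_max N w - omega_min N w) / (2 * cos (2 * eps)) ->
  is_kuramoto_solution N K w th -> 0 <= t -> in_D N eps (fun i => th i t) ->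
  (a < N)%nat -> (b < N)%nat ->
  exists d, 0 < d /\ forall s, t < s < t + d -> th a s - th b s <= PI / 2 - 2 * eps.
Proof. intros HN He HK Hs Ht HD Ha Hb.
  pose proof (sol_rc N K w th Hs) as Hrc.
  assert (Hf : filterlim (fun s => th a s - th b s) (at_right t) (locally (th a t - th b t))).
  { apply lim_minus; apply Hrc; auto. }
  assert (Hle : th a t - th b t <= PI / 2 - 2 * eps).
  { pose proof (HD a b Ha Hb); pose proof (Rle_abs (th a t - th b t)); simpl in *; lra. }
  destruct Hle as [Hlt|Heq].
  - destruct (right_lim_ev _ t _ (PI / 2 - 2 * eps - (th a t - th b t)) Hf) as [d [Hd0 Hd]]; [lra|].
    exists d; split; auto. intros s Hs'. specialize (Hd s Hs'). apply Rabs_def2 in Hd. lra.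
  - pose proof (boundary_neg N K eps w (fun i => th i t) a b HN He HK HD Ha Hb Heq) as HG.
    set (G := kuramoto_rhs N K w (fun i => th i t) a - kuramoto_rhs N K w (fun i => th i t) b) in *.
    assert (Hg : filterlim (fun s => kuramoto_rhs N K w (fun j => th j s) a - kuramoto_rhs N K w (fun j => th j s) b)
       (at_right t) (locally G)).
    { apply lim_minus; apply lim_rhs; auto; intros; apply Hrc; auto. }
    destruct (right_lim_ev _ t _ (- G) Hg) as [d [Hd0 Hd]]; [lra|].
    exists d; split; auto. intros s Hs'.
    rewrite <- Heq.
    apply (nonincr (fun s => th a s - th b s)
      (fun s => kuramoto_rhs N K w (fun j => th j s) a - kuramoto_rhs N K w (fun j => th j s) b) t s); [lra|exact Hf| |].
    + intros x Hx. apply der_diff; auto; lra.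
    + intros x Hx. assert (Hx' : t < x < t + d) by lra. specialize (Hd x Hx'). apply Rabs_def2 in Hd. lra. Qed.

Lemma finite_min n (P : nat -> R -> Prop) : (forall k d d', 0 < d' <= d -> P k d -> P k d') ->
  (forall k, (k < n)%nat -> exists d, 0 < d /\ P k d) -> exists d, 0 < d /\ forall k, (k < n)%nat -> P k d.
Proof. intros Hm. induction n; intros H.
  - exists 1; split; [lra|]; intros; lia.
  - destruct IHn as [d1 [Hd1 H1]]; [intros; apply H; lia|].
    destruct (H n ltac:(lia)) as [d2 [Hd2 H2]].
    exists (Rmin d1 d2); split; [apply Rmin_case; lra|]. intros k Hk.
    destruct (Nat.eq_dec k n) as [->|Hne].
    + apply Hm with d2; auto. split; [apply Rmin_case; lra| apply Rmin_r].
    + apply Hm with d1; [split; [apply Rmin_case; lra| apply Rmin_l]|]. apply H1; lia. Qed.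

Lemma local_step N K eps w th t : (1 <= N)%nat -> 0 < eps < PI / 4 ->
  K > INR N * (omega_max N w - omega_min N w) / (2 * cos (2 * eps)) ->
  is_kuramoto_solution N K w th -> 0 <= t -> in_D N eps (fun i => th i t) ->
  exists d, 0 < d /\ forall s, t < s < t + d -> in_D N eps (fun i => th i s).
Proof. intros HN He HK Hs Ht HD.
  destruct (finite_min N (fun a d => forall b, (b < N)%nat -> forall s, t < s < t + d -> th a s - th b s <= PI / 2 - 2 * eps))
    as [d [Hd0 Hd]].
  - intros k d d' Hdd H b Hb s Hs'. apply H; auto; lra.
  - intros a Ha. apply (finite_min N (fun b d => forall s, t < s < t + d -> th a s - th b s <= PI / 2 - 2 * eps)).
    + intros k d d' Hdd H s Hs'. apply H; lra.
    + intros b Hb. eapply pair_step; eauto.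
  - exists d; split; auto. intros s Hs' i j Hi Hj. simpl.
    pose proof (Hd i Hi j Hj s Hs'). pose proof (Hd j Hj i Hi s Hs').
    apply Rabs_le; lra. Qed.

Lemma cont_ev f x e : continuity_pt f x -> 0 < e -> exists d, 0 < d /\ forall y, Rabs (y - x) < d -> Rabs (f y - f x) < e.
Proof. intros H He. destruct (H e He) as [d [Hd Hd']]. exists d; split; auto.
  intros y Hy. destruct (Req_dec y x) as [->|Hne]. { rewrite Rminus_diag, Rabs_R0; auto. }
  apply Hd'. split; [split; [constructor| auto]|exact Hy]. Qed.

Lemma invariance N K eps w th : (1 <= N)%nat -> 0 < eps < PI / 4 ->
  K > INR N * (omega_max N w - omega_min N w) / (2 * cos (2 * eps)) ->
  is_kuramoto_solution N K w th -> in_D N eps (fun i => th i 0) ->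
  forall T, 0 <= T -> in_D N eps (fun i => th i T).
Proof. intros HN He HK Hs H0 T HT. apply NNPP; intro HnT.
  set (E := fun x => 0 <= x <= T /\ forall s, 0 <= s <= x -> in_D N eps (fun i => th i s)).
  destruct (completeness E) as [m [Hub Hlub]].
  - exists T. intros x [Hx _]; lra.
  - exists 0. split; [lra|]. intros s Hs'. replace s with 0 by lra. auto.
  - assert (Hm0 : 0 <= m) by (apply Hub; split; [lra|]; intros s Hs'; replace s with 0 by lra; auto).
    assert (HmT : m <= T) by (apply Hlub; intros x [Hx _]; lra).
    assert (C1 : forall s, 0 <= s < m -> in_D N eps (fun i => th i s)).
    { intros s Hs'. apply NNPP; intro Hn.
      assert (m <= s); [|lra]. apply Hlub. intros x [Hx Hx']. apply Rnot_lt_le. intro Hsx.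
      apply Hn, Hx'; lra. }
    assert (C2 : in_D N eps (fun i => th i m)).
    { destruct Hm0 as [Hm0| <-]; auto.
      intros a b Ha Hb. simpl. apply Rnot_lt_le; intro Hgt.
      assert (Hc : continuity_pt (fun s => th a s - th b s) m).
      { eapply derive_cont. apply der_diff; eauto. }
      destruct (cont_ev _ m (Rabs (th a m - th b m) - (PI / 2 - 2 * eps)) Hc) as [d [Hd Hd']]; [lra|].
      set (s := m - Rmin d m / 2).
      assert (Hmin : 0 < Rmin d m) by (apply Rmin_case; lra).
      pose proof (Rmin_l d m). pose proof (Rmin_r d m).
      assert (Hs1 : 0 <= s < m) by (unfold s; lra).
      pose proof (C1 s Hs1 a b Ha Hb) as Hs2; simpl in Hs2.
      assert (Hs3 : Rabs (s - m) < d) by (unfold s; rewrite Rabs_left; lra).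
      specialize (Hd' s Hs3). simpl in Hd'.
      pose proof (Rabs_triang_inv (th a m - th b m) (th a s - th b s)).
      rewrite Rabs_minus_sym in Hd'. lra. }
    assert (HmT' : m < T) by (destruct HmT as [|<-]; auto; contradiction).
    destruct (local_step N K eps w th m HN He HK Hs Hm0 C2) as [d [Hd Hd']].
    set (x := m + Rmin d (T - m) / 2).
    assert (Hmin : 0 < Rmin d (T - m)) by (apply Rmin_case; lra).
    pose proof (Rmin_l d (T - m)). pose proof (Rmin_r d (T - m)).
    assert (E x).
    { split; [unfold x; lra|]. intros s Hs'.
      destruct (Rlt_le_dec s m); [apply C1; lra|].
      destruct r as [r| <-]; [apply Hd'; unfold x in Hs'; lra| auto]. }
    pose proof (Hub x H2) as H3. unfold x in H3. lra. Qed.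

Lemma ls_swap' L (F : nat -> nat -> R) :
  ls L (fun i => ls L (fun j => F i j)) = ls L (fun i => ls L (fun j => F j i)).
Proof. apply ls_swap. Qed.

Lemma alg L (x y : nat -> R) (C : nat -> nat -> R) k c :
  (forall i j, C i j = C j i) -> (forall i j, In i L -> In j L -> c <= C i j) -> 0 <= k ->
  (forall i, y i = k * ls L (fun j => C i j * (x j - x i))) ->
  ls L (fun i => ls L (fun j => 2 * (x i - x j) * (y i - y j))) <=
    - 2 * (k * INR (length L)) * c * ls L (fun i => ls L (fun j => (x i - x j) ^ 2)).
Proof. intros Hsym Hc Hk Hy.
  set (n := INR (length L)).
  set (A := ls L (fun i => ls L (fun j => C i j * (x j - x i)))).
  assert (HA : A = - A).
  { unfold A at 1. rewrite ls_swap'. unfold A.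
    replace (- ls L (fun i => ls L (fun j => C i j * (x j - x i)))) with
      (-1 * ls L (fun i => ls L (fun j => C i j * (x j - x i)))) by ring.
    rewrite <- ls_scal. apply ls_ext; intros i _. rewrite <- ls_scal. apply ls_ext; intros j _.
    rewrite Hsym; ring. }
  assert (Sy : ls L y = 0).
  { rewrite (ls_ext L y (fun i => k * ls L (fun j => C i j * (x j - x i)))) by (intros; apply Hy).
    rewrite ls_scal. fold A. replace A with 0 by lra. ring. }
  set (B := ls L (fun i => ls L (fun j => C i j * x i * (x j - x i)))).
  set (Q := ls L (fun i => ls L (fun j => C i j * (x i - x j) ^ 2))).
  assert (HB : 2 * B = - Q).
  { assert (B = ls L (fun i => ls L (fun j => C i j * x j * (x i - x j)))).
    { unfold B; rewrite ls_swap'. apply ls_ext; intros i _; apply ls_ext; intros j _. rewrite Hsym; ring. }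
    replace (2 * B) with (B + B) by ring. rewrite H at 2. unfold B, Q.
    rewrite <- ls_plus. replace (- ls L (fun i => ls L (fun j => C i j * (x i - x j) ^ 2))) with
      (-1 * ls L (fun i => ls L (fun j => C i j * (x i - x j) ^ 2))) by ring.
    rewrite <- ls_scal. apply ls_ext; intros i _. rewrite <- ls_plus, <- ls_scal. apply ls_ext; intros j _. ring. }
  set (P := ls L (fun i => x i * y i)).
  assert (HP : P = k * B).
  { unfold P, B. rewrite <- ls_scal. apply ls_ext; intros i _. rewrite Hy, <- ls_scal, <- ls_scal.
    rewrite <- ls_scal. apply ls_ext; intros; ring. }
  assert (HdV : ls L (fun i => ls L (fun j => 2 * (x i - x j) * (y i - y j))) = 4 * n * P).
  { rewrite (ls_ext L _ (fun i => (2 * n) * (x i * y i) + (-2 * ls L y) * x i + (-2 * ls L x) * y i + 2 * P)).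
    - rewrite !ls_plus, !ls_scal. fold P. rewrite ls_const, Sy. fold n. ring.
    - intros i _. rewrite (ls_ext L _ (fun j => 2 * (x i * y i) + (-2 * x i) * y j + (-2 * y i) * x j + 2 * (x j * y j)))
        by (intros; ring).
      rewrite !ls_plus, !ls_scal, ls_const. fold n. unfold P. ring. }
  rewrite HdV, HP.
  assert (HQ : c * ls L (fun i => ls L (fun j => (x i - x j) ^ 2)) <= Q).
  { unfold Q. rewrite <- ls_scal. apply ls_le; intros i Hi. rewrite <- ls_scal. apply ls_le; intros j Hj.
    apply Rmult_le_compat_r; [apply pow2_ge_0| apply Hc; auto]. }
  assert (Hn : 0 <= n) by apply pos_INR.
  assert (Hkn : 0 <= k * n) by (apply Rmult_le_pos; auto).
  replace (4 * n * (k * B)) with (- 2 * (k * n) * Q) by (replace B with (-Q/2) by lra; field).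
  replace (- 2 * (k * n) * c * ls L (fun i => ls L (fun j => (x i - x j) ^ 2))) with
     (- 2 * (k * n) * (c * ls L (fun i => ls L (fun j => (x i - x j) ^ 2)))) by ring.
  apply Rmult_le_compat_neg_l; [lra|auto]. Qed.

Lemma is_derive_eq (f : R -> R) x l l' : is_derive f x l -> l = l' -> is_derive f x l'.
Proof. intros H <-; auto. Qed.

Definition nu N K w (th : nat -> R -> R) i s := kuramoto_rhs N K w (fun j => th j s) i.
Definition dnu N K w th i s := K / INR N * ls (seq 0 N)
  (fun j => cos (th j s - th i s) * (nu N K w th j s - nu N K w th i s)).

Lemma nu_der N K w th i s : is_kuramoto_solution N K w th -> (i < N)%nat -> 0 < s ->
  is_derive (nu N K w th i) s (dnu N K w th i s).
Proof. intros Hs Hi Hs0. destruct Hs as [_ H1].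
  unfold nu. unfold kuramoto_rhs. eapply is_derive_eq.
  - apply (is_derive_plus (K:=R_AbsRing) (V:=R_NormedModule) (fun _ => w i)
     (fun s => K / INR N * ls (seq 0 N) (fun j => sin (th j s - th i s)))).
    + apply (is_derive_const (K:=R_AbsRing) (V:=R_NormedModule)).
    + apply is_derive_scal. apply (ls_derive (seq 0 N) (fun j s => sin (th j s - th i s))).
      intros j Hj. apply in_seq in Hj. apply der_sin_diff; apply H1; auto; lia.
  - unfold dnu, nu. simpl. unfold plus, zero; simpl. rewrite Rplus_0_l. reflexivity. Qed.

Lemma der_sq (u : R -> R) s du : is_derive u s du -> is_derive (fun s => (u s) ^ 2) s (2 * u s * du).
Proof. intros H. eapply is_derive_eq; [apply is_derive_pow; exact H|]. simpl; ring. Qed.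

Definition V N K w th s := ls (seq 0 N) (fun i => ls (seq 0 N) (fun j => (nu N K w th i s - nu N K w th j s) ^ 2)).

Lemma cos_ge x g : Rabs x <= g -> g <= PI -> cos g <= cos x.
Proof. intros H Hg.
  assert (E : cos x = cos (Rabs x)).
  { destruct (Rcase_abs x); [rewrite Rabs_left, cos_neg by auto|rewrite Rabs_right by auto]; auto. }
  rewrite E. destruct H as [H|H]; [|rewrite H; lra].
  left. apply cos_decreasing_1; try lra; pose proof (Rabs_pos x); lra. Qed.

Lemma V_der N K eps w th s : (1 <= N)%nat -> 0 < eps < PI / 4 ->
  K > INR N * (omega_max N w - omega_min N w) / (2 * cos (2 * eps)) ->
  is_kuramoto_solution N K w th -> in_D N eps (fun i => th i 0) -> 0 < s ->
  exists dv, is_derive (V N K w th) s dv /\ dv <= - 2 * K * cos (PI / 2 - 2 * eps) * V N K w th s.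
Proof. intros HN He HK Hs H0 Hs0.
  destruct (K_facts N K eps w HN He HK) as [HK0 _].
  assert (HNp : 0 < INR N) by (apply lt_0_INR; lia).
  pose proof PI_RGT_0.
  exists (ls (seq 0 N) (fun i => ls (seq 0 N) (fun j => 2 * (nu N K w th i s - nu N K w th j s) *
            (dnu N K w th i s - dnu N K w th j s)))).
  split.
  - apply (ls_derive (seq 0 N) (fun i s => ls (seq 0 N) (fun j => (nu N K w th i s - nu N K w th j s) ^ 2))).
    intros i Hi. apply (ls_derive (seq 0 N) (fun j s => (nu N K w th i s - nu N K w th j s) ^ 2)).
    intros j Hj. apply in_seq in Hi; apply in_seq in Hj.
    apply (der_sq (fun s => nu N K w th i s - nu N K w th j s)).
    apply (is_derive_minus (K:=R_AbsRing) (V:=R_NormedModule)); apply nu_der; auto; lia.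
  - pose proof (alg (seq 0 N) (fun i => nu N K w th i s) (fun i => dnu N K w th i s)
      (fun i j => cos (th j s - th i s)) (K / INR N) (cos (PI / 2 - 2 * eps))) as HA.
    rewrite length_seq in HA. unfold V.
    replace (- 2 * K * cos (PI / 2 - 2 * eps)) with (- 2 * (K / INR N * INR N) * cos (PI / 2 - 2 * eps)) by (field; lra).
    apply HA.
    + intros i j. replace (th j s - th i s) with (- (th i s - th j s)) by ring. apply cos_neg.
    + intros i j Hi Hj. apply in_seq in Hi; apply in_seq in Hj. apply cos_ge; [|lra].
      apply (invariance N K eps w th HN He HK Hs H0 s); [lra|lia|lia].
    + apply Rlt_le, Rdiv_lt_0_compat; auto.
    + intros i. reflexivity. Qed.

Lemma der_expa a s : is_derive (fun s => exp (a * s)) s (a * exp (a * s)).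
Proof. assert (H1 : is_derive (fun s => a * s) s (a * 1)).
  { apply is_derive_scal. apply (is_derive_id (K:=R_AbsRing)). }
  assert (H2 : is_derive exp (a * s) (exp (a * s))) by (apply is_derive_Reals, derivable_pt_lim_exp).
  pose proof (is_derive_comp (K:=R_AbsRing) (V:=R_NormedModule) exp (fun s => a * s) s _ _ H2 H1) as H.
  simpl in H. unfold scal in H; simpl in H. unfold mult in H; simpl in H. rewrite Rmult_1_r in H. exact H. Qed.

Lemma V_nonneg N K w th s : 0 <= V N K w th s.
Proof. unfold V. apply ls_nonneg; intros; apply ls_nonneg; intros; apply pow2_ge_0. Qed.

Lemma V_decay N K eps w th : (1 <= N)%nat -> 0 < eps < PI / 4 ->
  K > INR N * (omega_max N w - omega_min N w) / (2 * cos (2 * eps)) ->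
  is_kuramoto_solution N K w th -> in_D N eps (fun i => th i 0) ->
  forall t, 1 < t -> V N K w th t * exp (2 * K * cos (PI / 2 - 2 * eps) * t) <=
      V N K w th 1 * exp (2 * K * cos (PI / 2 - 2 * eps) * 1).
Proof. intros HN He HK Hs H0 t Ht.
  set (a := 2 * K * cos (PI / 2 - 2 * eps)).
  set (W := fun s => V N K w th s * exp (a * s)).
  assert (HW : forall x, 0 < x -> is_derive W x (Derive W x) /\ Derive W x <= 0).
  { intros x Hx. destruct (V_der N K eps w th x HN He HK Hs H0 Hx) as [dv [Hdv Hle]].
    assert (HD : is_derive W x (dv * exp (a * x) + V N K w th x * (a * exp (a * x)))).
    { unfold W. apply (is_derive_mult (K:=R_AbsRing) (fun s => V N K w th s) (fun s => exp (a * s))); auto.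
      - apply der_expa.
      - intros; apply Rmult_comm. }
    rewrite (is_derive_unique _ _ _ HD). split; auto.
    pose proof (exp_pos (a * x)). fold a in Hle.
    replace (dv * exp (a * x) + V N K w th x * (a * exp (a * x))) with ((dv + a * V N K w th x) * exp (a * x)) by ring.
    assert (dv + a * V N K w th x <= 0) by (unfold a; lra). apply Rmult_le_0_r; lra. }
  change (W t <= W 1). apply (nonincr W (Derive W) 1 t); auto.
  - destruct (HW 1 ltac:(lra)) as [H1 _].
    eapply filterlim_filter_le_1; [apply filter_le_within|].
    apply (ex_derive_continuous (K:=R_AbsRing) (V:=R_NormedModule)). eexists; exact H1.
  - intros x Hx; apply HW; lra.
  - intros x Hx; apply HW; lra. Qed.

Theorem mainTheorem10 (N : nat) (K eps : R) (omega : nat -> R)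
  (theta : nat -> R -> R) :
  (1 <= N)%nat ->
  0 < eps < PI / 4 ->
  is_kuramoto_solution N K omega theta ->
  in_D N eps (fun i => theta i 0) ->
  K > INR N * (omega_max N omega - omega_min N omega) / (2 * cos (2 * eps)) ->
  forall i j, (i < N)%nat -> (j < N)%nat ->
    is_lim (fun t => Derive (theta i) t - Derive (theta j) t) p_infty 0.
Proof.
  intros HN He Hs H0 HK i j Hi Hj.
  destruct (K_facts N K eps omega HN He HK) as [HK0 _].
  pose proof PI_RGT_0.
  assert (Hc : 0 < cos (PI / 2 - 2 * eps)) by (apply cos_gt_0; lra).
  set (a := 2 * K * cos (PI / 2 - 2 * eps)).
  assert (Ha : 0 < a) by (unfold a; apply Rmult_lt_0_compat; lra).
  set (A := V N K omega theta 1 * exp (a * 1)).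
  assert (HA : 0 <= A) by (apply Rmult_le_pos; [apply V_nonneg| left; apply exp_pos]).
  apply is_lim_spec. intros e. simpl.
  pose proof (cond_pos e) as He0.
  exists (Rmax 1 (A / (a * (e * e)))). intros t Ht.
  assert (Ht1 : 1 < t) by (eapply Rle_lt_trans; [apply Rmax_l|exact Ht]).
  assert (Ht2 : A / (a * (e * e)) < t) by (eapply Rle_lt_trans; [apply Rmax_r|exact Ht]).
  destruct Hs as [Hs0 Hs1].
  rewrite (is_derive_unique _ _ _ (Hs1 i t Hi ltac:(lra))).
  rewrite (is_derive_unique _ _ _ (Hs1 j t Hj ltac:(lra))).
  fold (nu N K omega theta i t). fold (nu N K omega theta j t).
  set (d := nu N K omega theta i t - nu N K omega theta j t).
  assert (Hd : d ^ 2 <= V N K omega theta t).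
  { unfold V, d. eapply Rle_trans; [|apply (ls_ge1 _ _ i)].
    - apply (ls_ge1 (seq 0 N) (fun j0 => (nu N K omega theta i t - nu N K omega theta j0 t) ^ 2) j).
      + intros; apply pow2_ge_0.
      + apply in_seq; lia.
    - intros; apply ls_nonneg; intros; apply pow2_ge_0.
    - apply in_seq; lia. }
  pose proof (V_decay N K eps omega theta HN He HK (conj Hs0 Hs1) H0 t Ht1) as Hdec. fold a in Hdec. fold A in Hdec.
  assert (Hexp : a * t < exp (a * t)).
  { pose proof (exp_ineq1 (a * t)). assert (a * t <> 0) by nra. specialize (H1 H2). lra. }
  assert (Hat : 0 < a * t) by nra.
  assert (Hd2 : d ^ 2 < e * e).
  { assert (HVt : V N K omega theta t * (a * t) <= A).
    { eapply Rle_trans; [|exact Hdec]. apply Rmult_le_compat_l; [apply V_nonneg|lra]. }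
    assert (A < a * (e * e) * t).
    { apply Rmult_lt_compat_l with (r := a * (e * e)) in Ht2; [|apply Rmult_lt_0_compat; [lra| apply Rmult_lt_0_compat; lra]].
      replace (a * (e * e) * (A / (a * (e * e)))) with A in Ht2 by (field; repeat split; lra). lra. }
    nra. }
  rewrite Rminus_0_r. rewrite <- pow2_abs in Hd2. pose proof (Rabs_pos d). nra. Qed.
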